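(* Let $\mathcal{A}=\{A_1,\dots,A_m\}$ be a bimodal collection of pairwise disjoint nonempty subsets of a finite abelian group $G$, with internal difference groups $H_1,\dots,H_m$, such that $|A_i|=|H_i|$ for every $i$. Let $H=H_1+H_2+\dots+H_m$. Then each $A_i$ is a coset of $H_i$, and the sets $A_1,\dots,A_m$ arise from a subdivision of cosets of $H$, i.e. $A_1\cup\dots\cup A_m$ is a union of cosets of $H$ and each $A_i$ is contained in a single coset of $H$.
   Context: $G$ is written additively. The internal difference group $H_i$ of $A_i$ is the subgroup generated by all $x-y$ with $x,y\in A_i$; $A_i$ lies in a single coset of $H_i$ and $|A_i|\le|H_i|$. A collection $\{A_1,\dots,A_m\}$ of pairwise disjoint subsets of $G$ is bimodal if for every $i$ and every $\delta\in G\setminus\{0\}$, the number $N_i(\delta)$ of pairs $(a,b)$ with $a\in A_i$, $b\in A_j$ for some $j\neq i$, and $a-b=\delta$, satisfies $N_i(\delta)\in\{0,|A_i|\}$. *)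

(* Defs.v *)
From mathcomp Require Import all_boot all_fingroup.
Set Implicit Arguments.
Unset Strict Implicit.
Unset Printing Implicit Defensive.
Local Open Scope group_scope.

(* The finite abelian group G is modelled as a finGroupType gT with
   [set: gT] abelian, written multiplicatively: x - y becomes x * y^-1. *)

Definition diff_group (gT : finGroupType) (A : {set gT}) : {set gT} :=
  <<[set x * y^-1 | x in A, y in A]>>.

Definition Ncount (gT : finGroupType) (m : nat) (A : 'I_m -> {set gT})
  (i : 'I_m) (delta : gT) : nat :=
  #|[set ab : gT * gT | [&& ab.1 \in A i,
       [exists j : 'I_m, (j != i) && (ab.2 \in A j)] &
       ab.1 * ab.2^-1 == delta]]|.

Definition bimodal (gT : finGroupType) (m : nat) (A : 'I_m -> {set gT}) : Prop :=
  forall (i : 'I_m) (delta : gT), delta != 1 ->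
    Ncount A i delta = 0 \/ Ncount A i delta = #|A i|.

(* Main.v *)
Require Import Defs.
From mathcomp Require Import all_boot all_fingroup.
Local Open Scope group_scope.

Lemma coset_of_card (gT : finGroupType) (A : {set gT}) (a : gT) :
  a \in A -> #|A| = #|diff_group A| -> A = diff_group A :* a.
Proof.
move=> aA hc; apply/eqP; rewrite eqEcard card_rcoset -hc leqnn andbT.
apply/subsetP=> x xA; rewrite mem_rcoset /diff_group mem_gen //.
by apply/imset2P; exists x a.
Qed.

Theorem theorem3p18 (gT : finGroupType) (m : nat) (A : 'I_m -> {set gT}) :
  abelian [set: gT] ->
  (forall i j : 'I_m, i != j -> [disjoint A i & A j]) ->
  (forall i : 'I_m, A i != set0) ->
  bimodal A ->
  (forall i : 'I_m, #|A i| = #|diff_group (A i)|) ->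
  let H := <<\bigcup_(i < m) diff_group (A i)>> in
  (forall i : 'I_m, exists a : gT, A i = diff_group (A i) :* a) /\
  (exists C : {set {set gT}},
      C \subset rcosets H [set: gT] /\ cover C = \bigcup_(i < m) A i) /\
  (forall i : 'I_m, exists x : gT, A i \subset H :* x).
Proof.
move=> ab disj ne bim hc H.
have comm : forall x y : gT, x * y = y * x.
  move=> x y; move: ab; rewrite abelianE => /centsP cA.
  exact: (cA x (in_setT x) y (in_setT y)).
have rep : forall i, exists2 a, a \in A i & A i = diff_group (A i) :* a.
  move=> i; have [a aA] := set0Pn _ (ne i); exists a => //.
  exact: coset_of_card.
split; first by move=> i; have [a _ e] := rep i; exists a.
set U := \bigcup_(i < m) A i.
have clos : forall j h x, h \in diff_group (A j) -> x \in U -> x * h \in U.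
  move=> j h x hH /bigcupP [i _ xA].
  have [b bA Ab] := rep j.
  have bhA : b * h \in A j by rewrite Ab mem_rcoset (comm b h) mulgK.
  case: (eqVneq i j) => [eij | nij].
    rewrite eij in xA; apply/bigcupP; exists j => //.
    move: xA; rewrite Ab !mem_rcoset => xa.
    by rewrite -mulgA (comm h) mulgA; apply: groupM.
  have bx : b != x.
    apply/eqP=> ebx; subst b.
    by have := disj i j nij; rewrite disjoint_sym => /disjointFr /(_ bA); rewrite xA.
  pose d := b * x^-1.
  have d1 : d != 1 by rewrite /d -eq_mulgV1.
  pose f := fun a : gT => (a, d^-1 * a).
  have finj : injective f by move=> a1 a2 [].
  set S := [set ab : gT * gT | [&& ab.1 \in A j,
       [exists k : 'I_m, (k != j) && (ab.2 \in A k)] &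
       ab.1 * ab.2^-1 == d]].
  have SE : Ncount A j d = #|S| by [].
  have Ssub : S \subset f @: A j.
    apply/subsetP=> [[a c]]; rewrite inE /= => /and3P [aA _ /eqP e].
    apply/imsetP; exists a => //; rewrite /f; congr (_, _).
    by rewrite -e invMg invgK mulgKV.
  have bxS : (b, x) \in S.
    rewrite inE /= bA eqxx andbT; apply/existsP; exists i; by rewrite nij xA.
  have SA : S = f @: A j.
    apply/eqP; rewrite eqEcard Ssub card_imset //.
    rewrite -SE; case: (bim j d d1) => [h0|->]; last exact: leqnn.
    move: h0; rewrite SE => /eqP; rewrite cards_eq0 => /eqP S0.
    by rewrite S0 inE in bxS.
  have : f (b * h) \in S by rewrite SA imset_f.
  rewrite inE /= => /and3P [_ /existsP [k /andP [_ hk]] _].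
  apply/bigcupP; exists k => //.
  by move: hk; rewrite /d invMg invgK mulgA mulgKV.
have UH : forall h, h \in H -> U :* h = U.
  have sub : \bigcup_(i < m) diff_group (A i) \subset 'C[U | 'Rs].
    apply/subsetP=> h /bigcupP [j _ hj]; apply/astab1P => /=.
    rewrite rcosetE; apply/eqP; rewrite eqEcard card_rcoset leqnn andbT.
    apply/subsetP=> y /rcosetP [x xU ->]; exact: clos hj xU.
  move=> h hH; have hC : h \in 'C[U | 'Rs].
    by apply: (subsetP _ h hH); rewrite /H gen_subG.
  by move/astab1P: hC; rewrite /= rcosetE.
split.
  exists [set H :* x | x in U]; split.
    apply/subsetP=> B /imsetP [x xU ->]; apply/imsetP; exists x; rewrite ?in_setT ?rcosetE //.
  apply/setP=> y; rewrite /cover; apply/bigcupP/idP.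
    move=> [B /imsetP [x xU ->] yB]; move: yB; rewrite mem_rcoset => yH.
    by rewrite -(UH _ yH) mem_rcoset invMg invgK (comm x) mulKVg.
  by move=> yU; exists (H :* y); [apply: imset_f | apply: rcoset_refl].
move=> i; have [a _ e] := rep i; exists a; rewrite e rcosetS //.
rewrite /H; apply: (@subset_trans _ _ (\bigcup_(j < m) diff_group (A j))); last exact: sub_gen.
by apply/subsetP=> z zi; apply/bigcupP; exists i.
Qed.
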